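(* Let $T$ be a spherically homogeneous rooted tree in which every vertex has at least $2$ children, let $G\le\mathrm{Aut}~T$ be a weakly branch group, and let $N$ be a non-trivial normal subgroup of $G$. Then $N$ is a virtual retract of $G$ if and only if $N$ has finite index in $G$.
   Context: $\mathrm{Aut}~T$ is the group of automorphisms of $T$ fixing the root; $\mathcal{L}_n$ is the $n$th level; $T_v$ is the subtree of descendants of $v$. For $G\le\mathrm{Aut}~T$, $\mathrm{rist}_G(v)$ is the subgroup of elements of $G$ fixing every vertex outside $T_v$, and $\mathrm{Rist}_G(n)=\prod_{v\in\mathcal{L}_n}\mathrm{rist}_G(v)$. $G$ is weakly branch if it acts transitively on every level of $T$ and $\mathrm{Rist}_G(n)$ is infinite for every $n\ge1$. $H\le G$ is a virtual retract of $G$ if there is a finite-index subgroup $K\le G$ containing $H$ and a homomorphism $K\to H$ restricting to the identity on $H$. *)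

(* Defs.v *)
(* Rooted spherically homogeneous tree with
   branching sequence m : nat -> nat; vertices of level n are words
   x_0 ... x_(n-1) with x_i < m i. *)
From Stdlib Require List.
From mathcomp Require Import all_boot.
Set Implicit Arguments. Unset Strict Implicit. Unset Printing Implicit Defensive.

Definition validb (m : nat -> nat) (s : seq nat) : bool :=
  all (fun i => nth 0 s i < m i) (iota 0 (size s)).

Definition V (m : nat -> nat) := {s : seq nat | validb m s}.

Definition lvl (m : nat -> nat) (v : V m) : nat := size (proj1_sig v).

(* u is an ancestor-or-equal of w (w lies in the subtree T_u) *)
Definition below (m : nat -> nat) (u w : V m) : bool :=
  prefix (proj1_sig u) (proj1_sig w).

(* automorphisms of the rooted tree: bijections preserving levels and the
   ancestor relation (hence parent/child edges; the root is fixed) *)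
Definition is_aut (m : nat -> nat) (f : V m -> V m) : Prop :=
  bijective f /\ (forall u, lvl (f u) = lvl u) /\
  (forall u w, below (f u) (f w) = below u w).

Definition is_subgroup (m : nat -> nat) (G : (V m -> V m) -> Prop) : Prop :=
  (forall g, G g -> is_aut g) /\ G id /\
  (forall g h, G g -> G h -> G (g \o h)) /\
  (forall g, G g -> exists2 h, G h & (h \o g = id /\ g \o h = id)).

Definition subset_of (m : nat -> nat) (H G : (V m -> V m) -> Prop) : Prop :=
  forall g, H g -> G g.

Definition finite_set (m : nat -> nat) (S : (V m -> V m) -> Prop) : Prop :=
  exists l : seq (V m -> V m), forall g, S g -> List.In g l.

Definition finite_index (m : nat -> nat) (K G : (V m -> V m) -> Prop) : Prop :=
  exists reps : seq (V m -> V m), forall g, G g ->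
    exists2 r, List.In r reps & exists2 k, K k & g = r \o k.

Definition is_normal (m : nat -> nat) (N G : (V m -> V m) -> Prop) : Prop :=
  is_subgroup N /\ subset_of N G /\
  forall g n ginv, G g -> N n -> ginv \o g = id -> g \o ginv = id ->
    N (g \o n \o ginv).

Definition rist (m : nat -> nat) (G : (V m -> V m) -> Prop) (v : V m)
  (g : V m -> V m) : Prop :=
  G g /\ forall w, ~~ below v w -> g w = w.

Definition Rist (m : nat -> nat) (G : (V m -> V m) -> Prop) (n : nat)
  (g : V m -> V m) : Prop :=
  exists l : seq (V m * (V m -> V m)),
    (forall p, List.In p l -> lvl p.1 = n /\ rist G p.1 p.2) /\
    g = foldr (fun p acc => p.2 \o acc) id l.

Definition weakly_branch (m : nat -> nat) (G : (V m -> V m) -> Prop) : Prop :=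
  is_subgroup G /\
  (forall u v : V m, lvl u = lvl v -> exists2 g, G g & g u = v) /\
  (forall n, 1 <= n -> ~ finite_set (Rist G n)).

Definition virtual_retract (m : nat -> nat) (H G : (V m -> V m) -> Prop) : Prop :=
  exists K : (V m -> V m) -> Prop,
    is_subgroup K /\ subset_of K G /\ finite_index K G /\ subset_of H K /\
    exists phi : (V m -> V m) -> (V m -> V m),
      (forall k, K k -> H (phi k)) /\
      (forall k1 k2, K k1 -> K k2 -> phi (k1 \o k2) = phi k1 \o phi k2) /\
      (forall h, H h -> phi h = h).

(* Main.v *)
Require Import Defs.
From mathcomp Require Import all_boot.
From Stdlib Require Import FunctionalExtensionality Classical.
Set Implicit Arguments. Unset Strict Implicit. Unset Printing Implicit Defensive.

Section Aux.
Variable m : nat -> nat.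
Implicit Types (u w v y : V m) (f g : V m -> V m).

Lemma Veq u w : proj1_sig u = proj1_sig w -> u = w.
Proof.
case: u => s hs; case: w => t ht /= e; subst t.
by rewrite (bool_irrelevance hs ht).
Qed.

Lemma same_level u1 u2 w : below u1 w -> below u2 w -> lvl u1 = lvl u2 -> u1 = u2.
Proof.
rewrite /below /lvl => h1 h2 e; apply: Veq.
move: h1 h2; rewrite !prefixE => /eqP <- /eqP <-; by rewrite e.
Qed.

Lemma pt f g : f \o g = id -> forall x, f (g x) = x.
Proof. move=> E x; exact: (congr1 (fun F => F x) E). Qed.

Lemma aut_inj f : is_aut f -> injective f.
Proof. by case=> [/bij_inj]. Qed.

Lemma aut_below f u w : is_aut f -> below (f u) (f w) = below u w.
Proof. by case=> _ [_ ->]. Qed.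

Lemma aut_lvl f u : is_aut f -> lvl (f u) = lvl u.
Proof. by case=> _ [-> _]. Qed.

Lemma aut_desc f u w : is_aut f -> f u <> u -> below u w -> f w <> w.
Proof.
move=> A nu b ew; apply: nu; apply: (@same_level _ _ w) => //.
- by rewrite -ew aut_below.
- by rewrite aut_lvl.
Qed.

Lemma root_fixed f u : is_aut f -> f u <> u -> 1 <= lvl u.
Proof.
move=> A nu; rewrite lt0n; apply/negP => /eqP l0; apply: nu; apply: Veq.
have l1 : lvl (f u) = 0 by rewrite aut_lvl.
by move: l0 l1; rewrite /lvl => /size0nil -> /size0nil ->.
Qed.

Lemma supp_in g v y : is_aut g -> (forall w, ~~ below v w -> g w = w) ->
  g y <> y -> below v y /\ below v (g y).
Proof.
move=> A hf ny; split.
- by apply/negPn/negP => nb; apply: ny; apply: hf.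
- apply/negPn/negP => nb; apply: ny; apply: (aut_inj A); exact: hf.
Qed.

Lemma below_lvl u w : below u w -> lvl u <= lvl w.
Proof. exact: size_prefix. Qed.

Lemma extend (Hm : forall n, 0 < m n) v L : lvl v <= L ->
  exists2 w, lvl w = L & below v w.
Proof.
case: v => s hs; rewrite /lvl /= => hL.
have hv : validb m (s ++ nseq (L - size s) 0).
  rewrite /validb; apply/allP => i; rewrite mem_iota add0n => /andP [_ hi].
  rewrite nth_cat; case: ifP => h.
    by move: hs; rewrite /validb => /allP; apply; rewrite mem_iota add0n h.
  by rewrite nth_nseq; case: ifP.
exists (exist (fun t => validb m t) _ hv : V m); rewrite /lvl /=; first by rewrite size_cat size_nseq subnKC.
by rewrite /below /= prefix_prefix.
Qed.

Lemma sg_inv G g : is_subgroup G -> G g ->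
  exists2 h, G h & (forall x, h (g x) = x) /\ (forall x, g (h x) = x).
Proof.
case=> _ [_ [_ hi]] Gg; have [h Gh [e1 e2]] := hi g Gg.
by exists h => //; split; apply: pt.
Qed.

Lemma sg_aut G g : is_subgroup G -> G g -> is_aut g.
Proof. by case=> A _ /A. Qed.

Lemma sg_comp G g h : is_subgroup G -> G g -> G h -> G (g \o h).
Proof. by case=> _ [_ [C _]]; apply: C. Qed.

Lemma sg_inv_eq g h : (forall x, h (g x) = x) -> (forall x, g (h x) = x) ->
  h \o g = id /\ g \o h = id.
Proof. by move=> e1 e2; split; apply: functional_extensionality. Qed.

Lemma rist_nontriv G w : weakly_branch G -> 1 <= lvl w ->
  exists g, rist G w g /\ exists y, g y <> y.
Proof.
case=> SG [tr inf] hw.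
have [g [l [hl eg]] ng] : exists2 g, Rist G (lvl w) g & g <> id.
  apply: NNPP => H; apply: (inf _ hw); exists [:: id] => g Rg; left.
  apply: NNPP => ne; apply: H; exists g => // e; apply: ne; by rewrite e.
have [p pin np] : exists2 p, List.In p l & p.2 <> id.
  apply: NNPP => H; apply: ng; rewrite eg; clear hl eg.
  elim: l H => [|p l IH] H //=.
  have e2 : p.2 = id.
    by apply: NNPP => ne; apply: H; exists p => //; left.
  rewrite e2 IH //; move=> [q qin nq]; apply: H; exists q => //; by right.
have [lp [Gp fp]] := hl p pin.
have [y ny] : exists y, p.2 y <> y.
  apply: NNPP => H; apply: np; apply: functional_extensionality => y.
  by apply: NNPP => ne; apply: H; exists y.
have [h Gh hp] := tr _ _ lp.
have [hi Ghi [e1 e2]] := sg_inv SG Gh.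
have Ah := sg_aut SG Gh.
exists (h \o p.2 \o hi); split; first split.
- by apply: sg_comp => //; apply: sg_comp.
- move=> y' nb /=; rewrite fp ?e2 //; apply/negP => b; move/negP: nb; apply.
  by rewrite -hp -(e2 y') aut_below.
- exists (h y) => /=; rewrite e1 => E; apply: ny; exact: (aut_inj Ah).
Qed.

End Aux.

Section Main.
Variable m : nat -> nat.
Hypothesis Hm : forall n, 2 <= m n.
Variables G N : (V m -> V m) -> Prop.
Hypothesis WB : weakly_branch G.
Hypothesis NN : is_normal N G.

Lemma SG : is_subgroup G. Proof. by case: WB. Qed.
Lemma SN : is_subgroup N. Proof. by case: NN. Qed.
Lemma NG : subset_of N G. Proof. by case: NN => _ []. Qed.
Lemma Nconj g n gi : G g -> N n -> (forall x, gi (g x) = x) ->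
  (forall x, g (gi x) = x) -> N (g \o n \o gi).
Proof.
case: NN => _ [_ C] Gg Nn e1 e2; have [f1 f2] := sg_inv_eq e1 e2; exact: C.
Qed.

Lemma centralizer c n0 : N n0 -> n0 <> id -> G c ->
  (forall n x, N n -> c (n x) = n (c x)) -> c = id.
Proof.
move=> Nn0 n0ne Gc Hc; apply: NNPP => cne.
have Ac := sg_aut SG Gc.
have [u0 nu0] : exists u, c u <> u.
  apply: NNPP => H; apply: cne; apply: functional_extensionality => y.
  by apply: NNPP => ne; apply: H; exists y.
have [v0 nv0] : exists v, n0 v <> v.
  apply: NNPP => H; apply: n0ne; apply: functional_extensionality => y.
  by apply: NNPP => ne; apply: H; exists y.
have Hm1 : forall n, 0 < m n by move=> n; apply: leq_trans (Hm n).
have An0 := sg_aut SG (NG Nn0).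
have [u lu bu] := extend Hm1 (leq_maxl (lvl u0) (lvl v0)).
have [v lv bv] := extend Hm1 (leq_maxr (lvl u0) (lvl v0)).
have cu : c u <> u := aut_desc Ac nu0 bu.
have nv : n0 v <> v := aut_desc An0 nv0 bv.
have lu1 : 1 <= lvl u by apply: root_fixed Ac cu.
have [h Gh hv] : exists2 h, G h & h v = u by apply: (proj1 (proj2 WB)); rewrite lu lv.
have [hi Ghi [eh1 eh2]] := sg_inv SG Gh.
have Ah := sg_aut SG Gh.
have Nn1 : N (h \o n0 \o hi) by apply: Nconj.
move: Nn1; set n1 := h \o n0 \o hi => Nn1.
have n1u : n1 u <> u.
  rewrite /n1 /= -hv eh1 => E; apply: nv; exact: (aut_inj Ah).
have [n' [z [Nn' [lz [nz [cz nc]]]]]] : exists n' z, N n' /\ 1 <= lvl z /\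
    n' z <> z /\ c z <> z /\ n' z <> c z.
  case: (classic (n1 u = c u)) => E; last by exists n1, u.
  have lcu : 1 <= lvl (c u) by rewrite aut_lvl.
  have [g [[Gg fg] [y ny]]] := rist_nontriv WB lcu.
  have Ag := sg_aut SG Gg.
  have [by1 bgy] := supp_in Ag fg ny.
  have [n1i Nn1i [e1 e2]] := sg_inv SN Nn1.
  have An1 := sg_aut SG (NG Nn1).
  have [z ez] : exists z, n1 z = y by exists (n1i y); apply: e2.
  have bz : below u z by rewrite -(aut_below u z An1) ez E.
  have cz : c z <> z := aut_desc Ac cu bz.
  have lz : 1 <= lvl z := leq_trans lu1 (below_lvl bz).
  have nbz : ~~ below (c u) z.
    apply/negP => b; apply: cu; apply: (same_level b bz); by rewrite aut_lvl.
  have n1z : n1 z <> z.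
    by move=> E'; move/negP: nbz; apply; rewrite -E' ez.
  case: (classic (n1 z = c z)) => E2; last by exists n1, z.
  have [gi Ggi [eg1 eg2]] := sg_inv SG Gg.
  have gz : g z = z by apply: fg.
  have giz : gi z = z by rewrite -{1}gz eg1.
  exists (g \o n1 \o gi), z; split; first by apply: Nconj.
  split => //; rewrite /= giz ez.
  split; last split => //.
  - by move=> E3; move/negP: nbz; apply; rewrite -E3.
  - by rewrite -E2 ez.
have [g [[Gg fg] [y0 ny0]]] := rist_nontriv WB lz.
have Ag := sg_aut SG Gg.
have [gi Ggi [eg1 eg2]] := sg_inv SG Gg.
have [ni Nni [en1 en2]] := sg_inv SN Nn'.
have An' := sg_aut SG (NG Nn').
have Nx : N (n' \o g \o ni \o gi).
  have H : N (g \o ni \o gi) by apply: Nconj.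
  exact: (sg_comp SN Nn' H).
move: Nx; set x := n' \o g \o ni \o gi => Nx.
have [by0 bgy0] := supp_in Ag fg ny0.
have lsame : forall w, below z w -> below (n' z) w -> False.
  move=> w b1 b2; apply: nz; apply: (same_level b2 b1); by rewrite aut_lvl.
have xy1 : x (g y0) <> g y0.
  rewrite /x /= eg1 (fg (ni y0)) ?en2.
  - by move=> E; apply: ny0; rewrite -E.
  - apply/negP => b; apply: (lsame y0 by0).
    by rewrite -(en2 y0) (aut_below _ _ An').
have supp : forall w, x w <> w -> below z w \/ below (n' z) w.
  move=> w nx; apply: NNPP => H; apply: nx.
  have nb1 : ~~ below z w by apply/negP => b; apply: H; left.
  have nb2 : ~~ below (n' z) w by apply/negP => b; apply: H; right.
  rewrite /x /= (_ : gi w = w); last by rewrite -{1}(fg w nb1) eg1.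
  rewrite (fg (ni w)) ?en2 //.
  apply/negP => b; move/negP: nb2; apply.
  by rewrite -(en2 w) (aut_below _ _ An').
have cy1 : x (c (g y0)) <> c (g y0).
  rewrite -(Hc x (g y0) Nx) => E; apply: xy1; exact: (aut_inj Ac).
have bc : below (c z) (c (g y0)) by rewrite (aut_below _ _ Ac).
case: (supp _ cy1) => b.
- apply: cz; apply: (same_level bc b); by rewrite aut_lvl.
- apply: nc; apply: (same_level b bc); by rewrite !aut_lvl.
Qed.

End Main.

Theorem lemma3p3 (m : nat -> nat) (Hm : forall n, 2 <= m n)
  (G N : (V m -> V m) -> Prop) :
  weakly_branch G -> is_normal N G -> (exists2 n, N n & n <> id) ->
  (virtual_retract N G <-> finite_index N G).
Proof.
move=> WB NN [n0 Nn0 n0ne].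
have SN := SN NN; have NG := NG NN.
split.
- move=> [K [SK [KG [FK [NK [phi [phiN [phiM phiId]]]]]]]].
  suff KN : forall k, K k -> N k.
    case: FK => reps Hr; exists reps => g Gg; have [r rin [k Kk ->]] := Hr g Gg.
    by exists r => //; exists k => //; apply: KN.
  move=> k Kk.
  have Na : N (phi k) := phiN k Kk.
  move: Na; set a := phi k => Na.
  have [ai Nai [ea1 ea2]] := sg_inv SN Na.
  have Kai : K ai := NK _ Nai.
  have Kc : K (ai \o k) := sg_comp SK Kai Kk.
  have phic : phi (ai \o k) = id.
    rewrite phiM // (phiId ai Nai); apply: functional_extensionality => x /=.
    exact: ea1.
  move: Kc phic; set c := ai \o k => Kc phic.
  have cid : c = id.
    apply: (centralizer Hm WB NN Nn0 n0ne); first exact: KG.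
    move=> n x Nn.
    have [ci Kci [eci1 eci2]] := sg_inv SK Kc.
    have Nid : N id by case: SN => _ [].
    have phici : phi ci = id.
      have E : c \o ci = id by apply: functional_extensionality => w /=; apply: eci2.
      have := phiId _ Nid; rewrite -{1}E phiM // phic.
      by [].
    have [ni Nni [eni1 eni2]] := sg_inv SN Nn.
    have Kn : K n := NK _ Nn.
    have Kni : K ni := NK _ Nni.
    have Ny : N (c \o n \o ci \o ni).
      have H : N (c \o n \o ci) by apply: (Nconj NN) => //; exact: KG.
      exact: (sg_comp SN H Nni).
    have Ey : c \o n \o ci \o ni = n \o ni.
      rewrite -(phiId _ Ny).
      rewrite (phiM _ _ (sg_comp SK (sg_comp SK Kc Kn) Kci) Kni).
      rewrite (phiM _ _ (sg_comp SK Kc Kn) Kci) (phiM _ _ Kc Kn).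
      by rewrite phic phici (phiId _ Nn) (phiId _ Nni).
    move: (congr1 (fun F => F (n (c x))) Ey) => /=.
    by rewrite !eni1 eci1.
  have kE : k = a \o c.
    by apply: functional_extensionality => x /=; rewrite /c /= ea2.
  by rewrite kE cid.
- move=> FI; exists N; split => //; split => //; split => //; split => //.
  exists id; split => //.
Qed.
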